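(* For every integer $n\ge0$ and every non-decreasing sequence $\underline s=(s_1,\dots,s_u)\in S^u$, $$g_n^{(\underline s),\dagger}(w)=\prod_{i=1}^u g_{n_{u,i}}^{(s_i),\dagger}(w).$$
   Context: Fix a prime $p\ge7$ and $k_0\in\{2,\dots,p\}$. $\{n\}$ is the residue of $n$ mod $p-1$ in $\{0,\dots,p-2\}$. $\mathcal K=\{k\ge2:k\equiv k_0\pmod{p-1}\}$, $k_\bullet=(k-k_0)/(p-1)$. For $s\in\{0,\dots,p-2\}$: $a_s=\{k_0-2-2s\}$, $\delta_s=\lfloor\frac{s+\{a_s+s\}}{p-1}\rfloor$; if $a_s+s<p-1$, $t_1^{(s)}=s+\delta_s$, $t_2^{(s)}=a_s+s+\delta_s+2$; otherwise $t_1^{(s)}=\{a_s+s\}+\delta_s+1$, $t_2^{(s)}=s+\delta_s+1$. For $k\in\mathcal K$: $d_k^{ur,\dagger}(s)=\lfloor\frac{k_\bullet-t_1^{(s)}}{p+1}\rfloor+\lfloor\frac{k_\bullet-t_2^{(s)}}{p+1}\rfloor+2+\delta_s$. $S=\{\lceil\frac{k_0+1}{2}\rceil,\dots,\lfloor\frac{k_0+p-4}{2}\rfloor\}$. For a sequence $\underline s=(s_1,\dots,s_u)$ and $k\in\mathcal K$, put $D^{ur}=\sum_id_k^{ur,\dagger}(s_i)$, $D^{Iw}=u(2k_\bullet+2)$, $m_n^{(\underline s),\dagger}(k)=\min\{n-D^{ur},D^{Iw}-D^{ur}-n\}$ if $D^{ur}<n<D^{Iw}-D^{ur}$ and $0$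 otherwise, $w_k=\exp((k-2)p)-1$, $g_n^{(\underline s),\dagger}(w)=\prod_{k\in\mathcal K}(w-w_k)^{m_n^{(\underline s),\dagger}(k)}$ (for $u=1$ write $(s)$). For $n\ge0,u\ge1$, $q=\lfloor n/u\rfloor$: if $q$ even, $n_{u,i}=q$ for $i\le u(q+1)-n$ and $q+1$ otherwise; if $q$ odd, $n_{u,i}=q+1$ for $i\le n-uq$ and $q$ otherwise. *)

(* Defs.v *)
From HB Require Import structures.
From mathcomp Require Import all_boot all_order all_algebra.
Set Implicit Arguments. Unset Strict Implicit. Unset Printing Implicit Defensive.
Import Order.TTheory GRing.Theory Num.Theory.

(* All integer-valued quantities are computed in [int]; [%/] and [%%] on int
   (intdiv) are floor division / nonnegative remainder for a positive divisor. *)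
Local Open Scope ring_scope.

Definition resid (p : nat) (x : int) : int := (x %% (p.-1)%:Z)%Z.

Definition a_s (p k0 : nat) (s : nat) : int :=
  resid p (k0%:Z - 2 - 2 * s%:Z).

Definition delta_s (p k0 s : nat) : int :=
  ((s%:Z + resid p (a_s p k0 s + s%:Z)) %/ (p.-1)%:Z)%Z.

Definition t1 (p k0 s : nat) : int :=
  if a_s p k0 s + s%:Z < (p.-1)%:Z then s%:Z + delta_s p k0 s
  else resid p (a_s p k0 s + s%:Z) + delta_s p k0 s + 1.

Definition t2 (p k0 s : nat) : int :=
  if a_s p k0 s + s%:Z < (p.-1)%:Z then a_s p k0 s + s%:Z + delta_s p k0 s + 2
  else s%:Z + delta_s p k0 s + 1.

(* d_k^{ur,dagger}(s), with kb = k_bullet = (k - k0)/(p-1) *)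
Definition dur (p k0 s kb : nat) : int :=
  ((kb%:Z - t1 p k0 s) %/ (p.+1)%:Z)%Z + ((kb%:Z - t2 p k0 s) %/ (p.+1)%:Z)%Z
  + 2 + delta_s p k0 s.

Definition Dur (p k0 : nat) (ss : seq nat) (kb : nat) : int :=
  \sum_(s <- ss) dur p k0 s kb.

Definition DIw (ss : seq nat) (kb : nat) : int :=
  (size ss)%:Z * (2 * kb%:Z + 2).

Definition mexp (p k0 n : nat) (ss : seq nat) (kb : nat) : nat :=
  let Du := Dur p k0 ss kb in
  let Di := DIw ss kb in
  if (Du < n%:Z) && (n%:Z < Di - Du)
  then absz (Num.min (n%:Z - Du) (Di - Du - n%:Z))
  else 0%N.

(* For
   kb >= (n+2)(p+1) every exponent mexp vanishes (since t1,t2 <= p+1, each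
   d^ur(s) > n), so this finite product equals the product over all k in K. *)
Definition kbound (p n : nat) : nat := ((n + 2) * p.+1)%N.

(* k ranges over K = { k0 + (p-1) kb : kb in nat }; w k is the value w_k. *)
Definition gpoly (R : comNzRingType) (w : nat -> R) (p k0 n : nat) (ss : seq nat)
  : {poly R} :=
  \prod_(kb < kbound p n)
     ('X - (w (k0 + p.-1 * kb)%N)%:P) ^+ mexp p k0 n ss kb.

Definition inS (p k0 s : nat) : bool :=
  ((k0 + 2) %/ 2 <= s)%N && (s <= (k0 + p - 4) %/ 2)%N.

(* n_{u,i}, for 1 <= i <= u *)
Definition nui (n u i : nat) : nat :=
  let q := (n %/ u)%N in
  if ~~ odd q then (if (i <= u * q.+1 - n)%N then q else q.+1)
  else (if (i <= n - u * q)%N then q.+1 else q).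

(* Main.v *)
Require Import Defs.
From HB Require Import structures.
From mathcomp Require Import all_boot all_order all_algebra zify.
Import Order.TTheory GRing.Theory Num.Theory.
Local Open Scope ring_scope.
From mathcomp Require Import zify.

Lemma divz_id (x d q : int) : 0 < d -> q * d <= x < q * d + d -> (x %/ d)%Z = q.
Proof. move=> hd /andP[h1 h2]. nia. Qed.
Lemma modz_id (x d q : int) : 0 < d -> q * d <= x < q * d + d -> (x %% d)%Z = x - q * d.
Proof. move=> hd h. have := @divz_id x d q hd h. have := divz_eq x d. lia. Qed.

Lemma dur_S p k0 s kb : (7 <= p)%N -> (2 <= k0 <= p)%N -> inS p k0 s ->
  dur p k0 s kb = 2 + ((kb%:Z - (s%:Z + 1)) %/ (p.+1)%:Z)%Z
                    + ((kb%:Z + (s%:Z + 1) - k0%:Z) %/ (p.+1)%:Z)%Z.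
Proof.
move=> hp hk /andP[hs1 hs2].
have hs1' : (k0 + 1 <= 2 * s)%N by lia.
have hs2' : (2 * s <= k0 + p - 4)%N by lia.
have hP1 : (p.-1)%:Z = p%:Z - 1 by lia.
have ha : a_s p k0 s = p%:Z + k0%:Z - 3 - 2 * s%:Z.
  rewrite /a_s /resid (@modz_id _ _ (-1)); lia.
have hN : (0 < (p.+1)%:Z) by lia.
rewrite /dur /t1 /t2.
case: ifP => hc.
- have hr : resid p (a_s p k0 s + s%:Z) = a_s p k0 s + s%:Z.
    rewrite /resid (@modz_id _ _ 0); lia.
  have hd : delta_s p k0 s = 1.
    rewrite /delta_s hr (@divz_id _ _ 1); lia.
  rewrite hd ha.
  have -> : kb%:Z - (p%:Z + k0%:Z - 3 - 2 * s%:Z + s%:Z + 1 + 2)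
     = (-1) * (p.+1)%:Z + (kb%:Z + (s%:Z + 1) - k0%:Z) by lia.
  rewrite divzMDl; last by lia.
  lia.
- have hr : resid p (a_s p k0 s + s%:Z) = a_s p k0 s + s%:Z - (p%:Z - 1).
    rewrite /resid (@modz_id _ _ 1); lia.
  have hd : delta_s p k0 s = 0.
    rewrite /delta_s hr (@divz_id _ _ 0); lia.
  rewrite hd hr ha.
  have -> : kb%:Z - (p%:Z + k0%:Z - 3 - 2 * s%:Z + s%:Z - (p%:Z - 1) + 0 + 1)
     = kb%:Z + (s%:Z + 1) - k0%:Z by lia.
  have -> : kb%:Z - (s%:Z + 0 + 1) = kb%:Z - (s%:Z + 1) by lia.
  lia.
Qed.

Lemma sum_max0 u (T : 'I_u -> int) :
  (forall i j, 0 < T i -> T j < 0 -> False) ->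
  \sum_i Num.max 0 (T i) = Num.max 0 (\sum_i T i).
Proof.
move=> H. case: (boolP [exists i, 0 < T i]) => [/existsP[i hi]|/existsPn hn].
- have hT : forall j, 0 <= T j.
    by move=> j; case: (ltrP (T j) 0) => // /(H _ _ hi).
  rewrite (eq_bigr T) => [|j _]; last by have := hT j; lia.
  have : 0 <= \sum_j T j by apply: sumr_ge0 => j _; exact: hT.
  move=> h0; rewrite max_r //.
- have hT : forall j, T j <= 0 by move=> j; have := hn j; lia.
  rewrite big1 => [|j _]; last by have := hT j; lia.
  have : \sum_j T j <= \sum_(j < u) (0:int) by apply: ler_sum => j _; exact: hT.
  rewrite big1_eq. lia.
Qed.

Lemma sum_ind (u r : nat) (x y : int) :
  \sum_(i < u) (if (i.+1 <= r)%N then x else y) = (minn r u)%:Z * x + (u - r)%:Z * y.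
Proof.
elim: u => [|u IH]; first by rewrite big_ord0; lia.
rewrite big_ord_recr /= IH.
case: ifP => h.
- have -> : minn r u.+1 = (minn r u).+1 by lia.
  have -> : (u.+1 - r = u - r)%N by lia.
  rewrite -addn1 PoszD. lia.
- have -> : minn r u.+1 = minn r u by lia.
  have -> : (u.+1 - r = (u - r).+1)%N by lia.
  rewrite -addn1 PoszD. lia.
Qed.

Lemma nui_sum n u : (0 < u)%N -> \sum_(i < u) (nui n u i.+1)%:Z = n%:Z.
Proof.
move=> hu. rewrite /nui.
set q := (n %/ u)%N.
have hn := divn_eq n u. have hr := ltn_pmod n hu. rewrite -/q in hn.
move: (n %% u)%N hn hr => rr hn hr.
case hq: (odd q) => /=.
- under eq_bigr => i _ do rewrite (fun_if (fun x : nat => x%:Z)).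
  rewrite sum_ind.
  have -> : (n - u * q = rr)%N by rewrite hn; nia.
  have -> : minn rr u = rr by lia.
  rewrite hn. nia.
- under eq_bigr => i _ do rewrite (fun_if (fun x : nat => x%:Z)).
  rewrite sum_ind.
  have -> : (u * q.+1 - n = u - rr)%N by rewrite hn; nia.
  have -> : minn (u - rr) u = (u - rr)%N by lia.
  have -> : (u - (u - rr) = rr)%N by lia.
  rewrite hn. nia.
Qed.

Lemma nui_val n u i : nui n u i = (n %/ u)%N \/ nui n u i = (n %/ u).+1.
Proof. rewrite /nui; case: (odd _) => /=; case: ifP; auto. Qed.

Lemma nui_ord n u i j : (i <= j)%N ->
  (~~ odd (n %/ u) -> nui n u i = (n %/ u).+1 -> nui n u j = (n %/ u).+1) /\
  (odd (n %/ u) -> nui n u j = (n %/ u).+1 -> nui n u i = (n %/ u).+1).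
Proof.
move=> hij; rewrite /nui; split=> ->; rewrite /=;
  (case: ifP => h1; case: ifP => h2 //; try lia).
Qed.

Lemma const_sum (x : int) u : \sum_(i < u) x = u%:Z * x.
Proof. elim: u => [|u IH]; first by rewrite big_ord0; lia. rewrite big_ord_recr /= IH; lia. Qed.

Definition tent (m D C : int) : int := Num.max 0 (Num.min (m - D) (C - D - m)).

Lemma pure (u : nat) (c : int) (n : nat) (a b : nat -> int) :
 (0 < u)%N ->
 (forall i, (i < u)%N -> a i <= b i <= a i + 1) ->
 (forall i j, (i < j < u)%N -> a j <= a i /\ b i <= b j) ->
 \sum_(i < u) tent (nui n u i.+1)%:Z (2 + a i + b i) (2 * c)
 = tent n%:Z (\sum_(i < u) (2 + a i + b i)) (u%:Z * (2 * c)).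
Proof.
move=> hu hab hmono.
set q := (n %/ u)%N.
have hn := divn_eq n u. have hr := ltn_pmod n hu. rewrite -/q in hn.
have hsum := @nui_sum n u hu.
pose D i := 2 + a i + b i.
pose T (i : 'I_u) := Num.min ((nui n u i.+1)%:Z - D i) (2 * c - D i - (nui n u i.+1)%:Z).
have hT : \sum_i T i = Num.min (n%:Z - \sum_(i < u) D i) (u%:Z * (2 * c) - \sum_(i < u) D i - n%:Z).
  case: (lerP c q%:Z) => hcq.
  - rewrite (eq_bigr (fun i : 'I_u => 2 * c - D i - (nui n u i.+1)%:Z)); last first.
      move=> i _; rewrite /T; have := nui_val n u i.+1; rewrite -/q; lia.
    rewrite !sumrB const_sum hsum.
    have : (u * q <= n)%N by rewrite hn; lia.
    have : q%:Z * u%:Z <= n%:Z by lia.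
    have : u%:Z * c <= q%:Z * u%:Z by rewrite mulrC; apply: ler_wpM2r; lia.
    move: (\sum_(i < u) D i) => SD. nia.
  - rewrite (eq_bigr (fun i : 'I_u => (nui n u i.+1)%:Z - D i)); last first.
      move=> i _; rewrite /T; have := nui_val n u i.+1; rewrite -/q; lia.
    rewrite !sumrB hsum.
    have : (n < u * q.+1)%N by rewrite hn; nia.
    have : n%:Z < u%:Z * (q%:Z + 1) by lia.
    move: (\sum_(i < u) D i) => SD. have : u%:Z * (q%:Z + 1) <= u%:Z * c by apply: ler_wpM2l; lia.
    nia.
rewrite /tent -/D -hT -sum_max0 //.
move=> i j hi hj.
have hiu := ltn_ord i. have hju := ltn_ord j.
have := nui_val n u i.+1. have := nui_val n u j.+1. rewrite -/q.
have := hab _ hiu. have := hab _ hju.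
have := odd_double_half q.
move: hi hj; rewrite /T /D.
case: (ltngtP i j) => hij.
- have [h1 h2] := hmono i j (introT andP (conj hij hju)).
  have [h3 h4] := @nui_ord n u i.+1 j.+1 (ltnW (hij : (i.+1 < j.+1)%N)). rewrite -/q in h3 h4.
  move: h3 h4.
  case: (odd q) => /=; lia.
- have [h1 h2] := hmono j i (introT andP (conj hij hiu)).
  have [h3 h4] := @nui_ord n u j.+1 i.+1 (ltnW (hij : (j.+1 < i.+1)%N)). rewrite -/q in h3 h4.
  move: h3 h4.
  case: (odd q) => /=; lia.
- have -> : j = i by apply: val_inj.
  lia.
Qed.

Lemma divz_mono (x y d : int) : 0 < d -> x <= y -> (x %/ d)%Z <= (y %/ d)%Z.
Proof. move=> hd h. have := divz_eq x d. have := divz_eq y d. have := modz_ge0 x (lt0r_neq0 hd). nia. Qed.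

Lemma divz_gap (x y d : int) : 0 < d -> x <= y < x + d ->
  (x %/ d)%Z <= (y %/ d)%Z <= (x %/ d)%Z + 1.
Proof.
move=> hd /andP[h1 h2]. have := divz_eq x d. have := divz_eq y d.
have := modz_ge0 x (lt0r_neq0 hd). have := modz_ge0 y (lt0r_neq0 hd).
have := ltz_pmod x hd. have := ltz_pmod y hd. nia.
Qed.

Lemma mexp_int p k0 n ss kb :
  (mexp p k0 n ss kb)%:Z = tent n%:Z (Dur p k0 ss kb) (DIw ss kb).
Proof. rewrite /mexp /tent; case: ifP; lia. Qed.

Lemma dur_big p k0 s kb m : (7 <= p)%N -> (2 <= k0 <= p)%N -> inS p k0 s ->
  (kbound p m <= kb)%N -> m%:Z + 1 <= dur p k0 s kb.
Proof.
move=> hp hk hs hkb. rewrite dur_S //.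
have hs' := hs. move: hs' => /andP[h1 h2].
have hN : 0 < (p.+1)%:Z by lia.
have hkb' : ((m + 2) * p.+1 <= kb)%N by exact: hkb.
have e1 : (m%:Z + 1) * (p.+1)%:Z <= kb%:Z - (s%:Z + 1) by nia.
have e2 : (m%:Z + 1) * (p.+1)%:Z <= kb%:Z + (s%:Z + 1) - k0%:Z by nia.
have f1 := @divz_mono _ _ _ hN e1. have f2 := @divz_mono _ _ _ hN e2.
rewrite mulzK in f1 f2; try lia.
Qed.

Lemma Dur_big p k0 ss kb m : (7 <= p)%N -> (2 <= k0 <= p)%N -> all (inS p k0) ss ->
  (kbound p m <= kb)%N -> (size ss)%:Z * (m%:Z + 1) <= Dur p k0 ss kb.
Proof.
move=> hp hk; rewrite /Dur; elim: ss => [|s ss IH]; first by rewrite big_nil /=; lia.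
move=> /andP[hs hall] hkb. rewrite big_cons.
have := IH hall hkb. have := @dur_big _ _ _ _ _ hp hk hs hkb. rewrite /=. lia.
Qed.

Lemma mexp0 p k0 m ss kb : (7 <= p)%N -> (2 <= k0 <= p)%N -> (0 < size ss)%N ->
  all (inS p k0) ss -> (kbound p m <= kb)%N -> mexp p k0 m ss kb = 0%N.
Proof.
move=> hp hk hsz hall hkb. apply/eqP; rewrite -eqz_nat mexp_int /tent.
have := @Dur_big _ _ _ _ _ hp hk hall hkb.
have : 1 <= (size ss)%:Z by lia.
move: (Dur p k0 ss kb) => Du h1 h2.
have : m%:Z + 1 <= Du by nia.
rewrite /DIw. lia.
Qed.

Lemma gpoly_ext (R : comNzRingType) (w : nat -> R) p k0 m ss B :
  (7 <= p)%N -> (2 <= k0 <= p)%N -> (0 < size ss)%N -> all (inS p k0) ss ->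
  (kbound p m <= B)%N ->
  gpoly w p k0 m ss = \prod_(kb < B) ('X - (w (k0 + p.-1 * kb)%N)%:P) ^+ mexp p k0 m ss kb.
Proof.
move=> hp hk hsz hall hB. rewrite /gpoly (big_ord_widen B (fun kb => ('X - (w (k0 + p.-1 * kb)%N)%:P) ^+ mexp p k0 m ss kb) hB) big_mkcond /=.
apply: eq_bigr => i _. case: ifP => // h.
by rewrite mexp0 // ?expr0 //; lia.
Qed.

Lemma nui_le n u i : (0 < u)%N -> (nui n u i <= n.+1)%N.
Proof. move=> hu. have := leq_div n u. case: (nui_val n u i) => ->; lia. Qed.

Theorem mainTheorem10 (R : comNzRingType) (w : nat -> R) (p k0 n : nat)
    (ss : seq nat) :
  prime p -> (7 <= p)%N -> (2 <= k0 <= p)%N ->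
  (0 < size ss)%N -> all (inS p k0) ss -> sorted leq ss ->
  gpoly w p k0 n ss =
  \prod_(i < size ss) gpoly w p k0 (nui n (size ss) i.+1) [:: nth 0%N ss i].
Proof.
move=> hpr hp hk hsz hall hsort.
have hin : forall i, (i < size ss)%N -> inS p k0 (nth 0%N ss i).
  by move=> i hi; exact: (all_nthP 0%N hall).
set u := size ss in hsz hin *.
pose B := kbound p n.+1.
rewrite (@gpoly_ext _ w p k0 n ss B hp hk hsz hall); last by rewrite /B /kbound; nia.
rewrite (eq_bigr (fun i : 'I_u => \prod_(kb < B) ('X - (w (k0 + p.-1 * kb)%N)%:P) ^+
     mexp p k0 (nui n u i.+1) [:: nth 0%N ss i] kb)); last first.
  move=> i _. apply: gpoly_ext => //=.
  - by rewrite hin.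
  - rewrite /B /kbound. have := @nui_le n u i.+1 hsz. nia.
rewrite exchange_big /=. apply: eq_bigr => kb _. rewrite prodrXr. congr (_ ^+ _).
apply/eqP; rewrite -eqz_nat; apply/eqP. rewrite -[X in _ = X]natz natr_sum.
under eq_bigr do rewrite natz.
pose N := (p.+1)%:Z.
pose a := fun i : nat => ((kb%:Z - ((nth 0%N ss i)%:Z + 1)) %/ N)%Z.
pose b := fun i : nat => ((kb%:Z + ((nth 0%N ss i)%:Z + 1) - k0%:Z) %/ N)%Z.
have hdur : forall i, (i < u)%N -> dur p k0 (nth 0%N ss i) kb = 2 + a i + b i.
  by move=> i hi; rewrite dur_S // hin.
rewrite (eq_bigr (fun i : 'I_u => tent (nui n u i.+1)%:Z (2 + a i + b i) (2 * (kb%:Z + 1)))); last first.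
  move=> i _; rewrite mexp_int /Dur big_seq1 /DIw /= hdur //. congr tent; lia.
rewrite mexp_int /Dur (big_nth 0%N) big_mkord -/u.
rewrite (eq_bigr (fun i : 'I_u => 2 + a i + b i)); last by move=> i _; exact: hdur.
have -> : DIw ss kb = u%:Z * (2 * (kb%:Z + 1)) by rewrite /DIw; lia.
have hN : 0 < N by rewrite /N; lia.
symmetry; apply: pure => //.
- move=> i hi. have := hin i hi. move=> /andP[h1 h2].
  apply: divz_gap => //. lia.
- move=> i j /andP[hij hj].
  have hle : (nth 0%N ss i <= nth 0%N ss j)%N.
    apply: (sorted_leq_nth leq_trans leqnn) => //=; first [exact: (ltn_trans hij hj) | exact: ltnW hij | exact: hj].
  split; apply: divz_mono => //; lia.
Qed.
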